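(* Let $a\in\mathbb{Q}\setminus\{-1,0,1\}$, $z\in\mathbb{C}$ with $|z|\le1$, and $\xi<x$ positive real numbers. Then \begin{multline*} \sum_{\substack{p\le x \\ \nu_p(a)=0}} z^{\omega(p-1) - \omega(\mathrm{ord}_p(a))} = \sum_{\ell\mid Q_\xi} (z-1)^{\omega(\ell)}\sum_{m\mid \ell}\mu(m)\, \#\bigl\{ p\le x : \nu_p(a)=0,\ \ell\mid (p-1)/\mathrm{ord}_p(a),\ m\ell\mid (p-1)\bigr\}\\ + O\biggl( \sum_{\xi<q^k\le x} \#\bigl\{ p\le x : \nu_p(a)=0,\ q^k \mid (p-1)/\mathrm{ord}_p(a),\ q^k\,\|\, (p-1) \bigr\} \biggr), \end{multline*} with an absolute implied constant, where the error sum is over prime powers $q^k$ ($k\ge1$) in $(\xi,x]$.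
   Context: $p,q$ denote primes. $\nu_p(a)$ is the $p$-adic valuation of $a$; $\mathrm{ord}_p(a)$ is the multiplicative order of $a$ mod $p$; $\omega(n)$ is the number of distinct prime factors; $\mu$ is the Möbius function; $q^k\| n$ means $q^k\mid n$ and $q^{k+1}\nmid n$. For $\xi>0$, $Q_\xi$ is the least common multiple of all positive integers $\le\xi$. The convention $0^0=1$ is used. *)

(* Defs.v *)
From HB Require Import structures.
From mathcomp Require Import all_boot all_order all_algebra all_fingroup all_field.
From mathcomp Require Import complex.
From mathcomp Require Import Rstruct.
From Stdlib Require Rdefinitions.
Set Implicit Arguments. Unset Strict Implicit. Unset Printing Implicit Defensive.
Import Order.TTheory GRing.Theory Num.Theory.

Definition RR : rcfType := Rdefinitions.R.
Notation CC := (complex RR).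

Definition nu (p : nat) (a : rat) : int :=
  (logn p `|numq a|%N)%:Z - (logn p `|denq a|%N)%:Z.

(* Multiplicative order of a modulo p: the order of the class of a in the
   unit group of F_p (only meaningful when p is prime and nu_p(a) = 0). *)
Definition ordp (p : nat) (a : rat) : nat :=
  #[insubd (1 : {unit 'F_p}) (ratr a : 'F_p)]%g.

Definition omega (n : nat) : nat := size (primes n).

Definition mu (n : nat) : int :=
  if (0 < n) && all (fun q => logn q n == 1%N) (primes n)
  then ((-1) ^+ omega n)%R else 0%R.

Definition Qxi (xi : RR) : nat :=
  \big[lcmn/1%N]_(1 <= i < (Num.truncn xi).+1 | (i%:R <= xi)%R) i.

Definition prime_count (x : RR) (P : nat -> bool) : nat :=
  \sum_(p < (Num.truncn x).+1 | prime p && (p%:R <= x)%R && P p) 1%N.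

(* Main.v *)
Require Import Defs.
From HB Require Import structures.
From mathcomp Require Import all_boot all_order all_algebra all_fingroup all_field.
From mathcomp Require Import complex.
From mathcomp Require Import Rstruct.
From mathcomp Require Import ring zify.
Import Order.TTheory GRing.Theory Num.Theory.

Lemma dvdn_gcd_mul l a b : l %| a * b -> l %| gcdn l a * gcdn l b.
Proof.
move=> lab; rewrite muln_gcdl dvdn_gcd dvdn_mulr //= muln_gcdr dvdn_gcd lab.
by rewrite dvdn_mull.
Qed.

Lemma sum_divisorsM (R : nmodType) (F : nat -> R) a b :
  coprime a b -> 0 < a -> 0 < b ->
  (\sum_(l <- divisors (a * b)) F l =
  \sum_(l1 <- divisors a) \sum_(l2 <- divisors b) F (l1 * l2))%R.
Proof.
move=> cab a0 b0.
rewrite -(@big_allpairs_dep _ _ _ _ _ _ (fun l1 l2 => (l1 * l2)%N) _ (fun=> divisors b)).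
apply: perm_big; apply: uniq_perm.
- exact: divisors_uniq.
- apply: allpairs_uniq; rewrite ?divisors_uniq //.
  move=> [x1 x2] [y1 y2] /allpairsP[[u1 u2] /= [u1a u2b [-> ->]]].
  move=> /allpairsP[[v1 v2] /= [v1a v2b [-> ->]]] /= e.
  rewrite -!dvdn_divisors // in u1a u2b v1a v2b.
  have h1 : forall w1 w2, w1 %| a -> w2 %| b -> gcdn a (w1 * w2) = w1.
    move=> w1 w2 w1a w2b; rewrite Gauss_gcdl; first exact/gcdn_idPr.
    by rewrite coprime_sym (coprime_dvdl w2b) // coprime_sym.
  have h2 : forall w1 w2, w1 %| a -> w2 %| b -> gcdn b (w1 * w2) = w2.
    move=> w1 w2 w1a w2b; rewrite Gauss_gcdr; first exact/gcdn_idPr.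
    by rewrite (coprime_dvdr w1a) // coprime_sym.
  have E1 : u1 = v1 by rewrite -(h1 u1 u2) // e h1.
  have E2 : u2 = v2 by rewrite -(h2 u1 u2) // e h2.
  by rewrite E1 E2.
move=> l; apply/idP/allpairsP => [|[[l1 l2] /= [l1a l2b ->]]]; last first.
  by rewrite -!dvdn_divisors ?muln_gt0 ?a0 // in l1a l2b *; exact: dvdn_mul.
rewrite -dvdn_divisors ?muln_gt0 ?a0 // => lab.
exists (gcdn l a, gcdn l b) => /=.
rewrite -!dvdn_divisors // !dvdn_gcdr; split => //.
have c12 : coprime (gcdn l a) (gcdn l b).
  by rewrite (coprime_dvdl (dvdn_gcdr _ _)) // (coprime_dvdr (dvdn_gcdr _ _)).
apply/eqP; rewrite eqn_dvd; apply/andP; split; last first.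
  by rewrite Gauss_dvd // !dvdn_gcdl.
exact: dvdn_gcd_mul.
Qed.

Lemma sum_divisors_mult (R : comNzRingType) (H : nat -> nat -> R) :
  H 1 1 = 1%R ->
  (forall a b l1 l2, coprime a b -> 0 < a -> 0 < b -> l1 %| a -> l2 %| b ->
     H (a * b) (l1 * l2) = (H a l1 * H b l2)%R) ->
  forall n, 0 < n ->
  (\sum_(l <- divisors n) H n l =
   \prod_(q <- primes n) \sum_(l <- divisors (q ^ logn q n)%N) H (q ^ logn q n)%N l)%R.
Proof.
move=> H1 Hm m; elim: m.+1 {-2}m (ltnSn m) => // N IH n nN n0.
have [n1|] := ltnP 1 n; last first.
  move=> n1; have -> : n = 1 by apply/eqP; rewrite eqn_leq n1.
  by rewrite big_nil big_seq1.
have pq : prime (pdiv n) by exact: pdiv_prime.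
have qn : pdiv n \in primes n by rewrite mem_primes pq n0 pdiv_dvd.
set q := pdiv n in pq qn *.
set a := n`_q; set b := n`_q^'.
have nab : n = a * b by rewrite partnC.
have cab : coprime a b by exact: coprime_partC.
have ae : a = q ^ logn q n by rewrite /a p_part.
have a1 : 1 < a by rewrite /a p_part_gt1.
have a0 : 0 < a by exact: part_gt0.
have b0 : 0 < b by exact: part_gt0.
have bN : b < N.
  have bn : b < n by rewrite [X in _ < X]nab ltn_Pmull.
  by apply: (leq_trans bn); rewrite -ltnS.
rewrite [in LHS]nab sum_divisorsM //.
under eq_big_seq => l1 l1a.
  under eq_big_seq => l2 l2b.
    rewrite Hm // ?dvdn_divisors //.
  over.
  rewrite -mulr_sumr.
over.
rewrite -mulr_suml [X in (_ * X)%R]IH // [in RHS](bigD1_seq q) ?primes_uniq //= ae.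
congr (GRing.mul _ _).
rewrite /b primes_part big_filter big_seq_cond [RHS]big_seq_cond.
apply: eq_big => [r|r /andP[rn rq]]; first by rewrite !inE.
have E : logn r n = logn r b.
  rewrite {1}nab lognM // ae lognX (logn_prime _ pq).
  by move: rq; rewrite !inE => /negbTE ->; rewrite muln0.
by rewrite E.
Qed.


Lemma primesM_perm a b : coprime a b -> 0 < a -> 0 < b ->
  perm_eq (primes (a * b)) (primes a ++ primes b).
Proof.
move=> cab a0 b0; apply: uniq_perm; rewrite ?primes_uniq //.
  rewrite cat_uniq !primes_uniq andbT /=.
  by move: cab; rewrite coprime_has_primes.
by move=> r; rewrite primesM // mem_cat.
Qed.

Lemma omegaM a b : coprime a b -> 0 < a -> 0 < b ->
  omega (a * b) = omega a + omega b.
Proof.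
by move=> cab a0 b0; rewrite /omega -size_cat; apply: perm_size; apply: primesM_perm.
Qed.

Lemma notin_primes_coprime {a b} r : coprime a b -> 0 < a -> 0 < b ->
  r \in primes a -> logn r b = 0.
Proof.
move=> cab a0 b0 ra; apply/eqP; rewrite -leqn0 leqNgt logn_gt0.
apply/negP => rb; move: cab; rewrite coprime_has_primes // => /hasPn /(_ r rb).
by rewrite /= ra.
Qed.

Lemma muM a b : coprime a b -> 0 < a -> 0 < b ->
  mu (a * b) = (mu a * mu b)%R.
Proof.
move=> cab a0 b0; rewrite /mu muln_gt0 a0 b0 /=.
rewrite (perm_all _ (primesM_perm a b cab a0 b0)) all_cat.
have -> : all (fun q => logn q (a * b) == 1) (primes a) =
          all (fun q => logn q a == 1) (primes a).
  apply: eq_in_all => r ra; rewrite lognM // (notin_primes_coprime _ cab) //.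
  by rewrite addn0.
have -> : all (fun q => logn q (a * b) == 1) (primes b) =
          all (fun q => logn q b == 1) (primes b).
  apply: eq_in_all => r rb; rewrite lognM // (notin_primes_coprime _ _ b0 a0) //.
  by rewrite coprime_sym.
case: (all _ (primes a)); case: (all _ (primes b)); rewrite ?mulr0 ?mul0r //.
by rewrite omegaM // exprD.
Qed.

Lemma sum_pick1 (R : nmodType) (s : seq nat) j (F : nat -> R) :
  uniq s -> j \in s -> (\sum_(i <- s) (if i == j then F i else 0) = F j)%R.
Proof.
move=> us js; rewrite (bigD1_seq j) //= eqxx big1 ?addr0 // => i /negbTE ->.
by [].
Qed.

Lemma mu1 : mu 1 = 1%R.
Proof. by []. Qed.

Lemma mu_pow q k : prime q ->
  mu (q ^ k) = (if k == 0 then 1 else if k == 1 then -1 else 0)%R.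
Proof.
move=> pq; case: k => [|[|k]] //=.
  by rewrite expn1 /mu prime_gt0 //= primes_prime //= logn_prime // eqxx /omega primes_prime.
rewrite /mu primesX // primes_prime //= pfactorK //= andbF.
by [].
Qed.

Lemma sum_mu_pow q e : prime q -> 0 < e ->
  (\sum_(m <- divisors (q ^ e)) mu m = 0)%R.
Proof.
move=> pq e0.
have q1 := prime_gt1 pq.
rewrite (eq_big_seq (fun m => (if m == 1 then 1 else 0) + (if m == q then -1 else 0))%R).
  rewrite big_split /= !sum_pick1 ?divisors_uniq ?divisor1 ?addrN //.
  by rewrite -dvdn_divisors ?expn_gt0 ?prime_gt0 // -{1}(expn1 q) dvdn_exp2l.
move=> m; rewrite -dvdn_divisors ?expn_gt0 ?prime_gt0 //.
case/(dvdn_pfactor _ _ pq) => k _ ->.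
have h1 : (q ^ k == 1) = (k == 0) by rewrite -[X in _ == X](expn0 q) eqn_exp2l.
have h2 : (q ^ k == q) = (k == 1) by rewrite -[X in _ == X](expn1 q) eqn_exp2l.
by rewrite mu_pow // h1 h2; case: k {h1 h2} => [|[|k]].
Qed.

Lemma sum_mu g : 0 < g -> (\sum_(m <- divisors g) mu m = (g == 1)%:R)%R.
Proof.
move=> g0.
rewrite (@sum_divisors_mult _ (fun _ l => mu l)) //; last first.
  move=> a b l1 l2 cab a0 b0 l1a l2b; apply: muM.
  - by rewrite (coprime_dvdl l1a) // (coprime_dvdr l2b).
  - exact: dvdn_gt0 l1a.
  - exact: dvdn_gt0 l2b.
have [g1|g1] := ltnP 1 g; last first.
  have -> : g = 1 by apply/eqP; rewrite eqn_leq g1 g0.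
  by rewrite big_nil.
have pq : prime (pdiv g) by exact: pdiv_prime.
have qg : pdiv g \in primes g by rewrite mem_primes pq g0 pdiv_dvd.
rewrite (bigD1_seq (pdiv g)) ?primes_uniq //= sum_mu_pow ?logn_gt0 // mul0r.
by case: eqP g1 => // ->.
Qed.

Lemma divn_mul2 a b l1 l2 : l1 %| a -> l2 %| b -> 0 < l1 -> 0 < l2 ->
  (a * b) %/ (l1 * l2) = (a %/ l1) * (b %/ l2).
Proof.
move=> /dvdnP[a' ->] /dvdnP[b' ->] l10 l20.
by rewrite mulnACA mulnK ?muln_gt0 ?l10 // !mulnK.
Qed.

Lemma omega_pow q k : prime q -> 0 < k -> omega (q ^ k) = 1.
Proof. by move=> pq k0; rewrite /omega primesX // primes_prime. Qed.

Lemma sum_unitary_pow (R : comNzRingType) (P : nat -> bool) (w : R) q e :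
  P 1 -> prime q -> 0 < e ->
  (\sum_(l <- divisors (q ^ e)%N) ((coprime l (q ^ e %/ l)%N && P l)%:R * w ^+ omega l)
   = 1 + (P (q ^ e)%N)%:R * w)%R.
Proof.
move=> P1 pq e0.
have q1 := prime_gt1 pq.
have qe1 : (q ^ e == 1) = false by rewrite -[X in _ == X](expn0 q) eqn_exp2l // eqn0Ngt e0.
rewrite (eq_big_seq (fun l => (if l == 1 then 1 else 0) +
     (if l == (q ^ e)%N then (P (q ^ e)%N)%:R * w else 0))%R).
  rewrite big_split /= !sum_pick1 ?divisors_uniq ?divisor1 //.
  by rewrite divisors_id // expn_gt0 prime_gt0.
move=> l; rewrite -dvdn_divisors ?expn_gt0 ?prime_gt0 //.
case/(dvdn_pfactor _ _ pq) => k ke ->.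
have h1 : (q ^ k == 1) = (k == 0) by rewrite -[X in _ == X](expn0 q) eqn_exp2l.
have h2 : (q ^ k == q ^ e) = (k == e) by rewrite eqn_exp2l.
rewrite h1 h2 -expnB ?prime_gt0 //.
have [->|k0] := eqVneq k 0.
  rewrite expn0 coprime1n P1 /omega /=.
  by rewrite mul1r expr0; case: e e0 {qe1 ke h2} => // e0 _; rewrite addr0.
have [->|ke'] := eqVneq k e.
  by rewrite subnn expn0 coprimen1 omega_pow // expr1 add0r.

rewrite add0r.
have kl : 0 < e - k by rewrite subn_gt0 ltn_neqAle ke' ke.
by rewrite coprime_pexpl ?lt0n // coprime_pexpr // /coprime gcdnn (gtn_eqF q1) mul0r.
Qed.

Lemma sum_unitary (R : comNzRingType) (P : nat -> bool) (w : R) n :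
  P 1 -> (forall a b, coprime a b -> P (a * b) = P a && P b) -> 0 < n ->
  (\sum_(l <- divisors n) ((coprime l (n %/ l)%N && P l)%:R * w ^+ omega l) =
   \prod_(q <- primes n) (1 + (P (q ^ logn q n)%N)%:R * w))%R.
Proof.
move=> P1 PM n0.
rewrite (@sum_divisors_mult _ (fun n l =>
   ((coprime l (n %/ l)%N && P l)%:R * w ^+ omega l)%R)) //; last first.
- move=> a b l1 l2 cab a0 b0 l1a l2b.
  have l10 : 0 < l1 by exact: dvdn_gt0 l1a.
  have l20 : 0 < l2 by exact: dvdn_gt0 l2b.
  have c12 : coprime l1 l2 by rewrite (coprime_dvdl l1a) // (coprime_dvdr l2b).
  rewrite divn_mul2 // omegaM // PM // exprD coprimeMl !coprimeMr.
  have -> : coprime l1 (b %/ l2) by rewrite (coprime_dvdl l1a) // (coprime_dvdr (dvdn_div l2b)).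
  have -> : coprime l2 (a %/ l1).
    by rewrite coprime_sym (coprime_dvdl (dvdn_div l1a)) // (coprime_dvdr l2b).
  rewrite andbT andTb.
  case: (coprime l1 _); case: (coprime l2 _); case: (P l1); case: (P l2) => /=;
    rewrite ?mul0r ?mul1r ?mulr0 //.
- by rewrite divnn /= P1 /= mul1r expr0.
apply: eq_big_seq => q; rewrite mem_primes => /and3P[pq _ qn].
apply: sum_unitary_pow => //.
by rewrite logn_gt0 mem_primes pq n0.
Qed.

Lemma sum_mu_R (R : comNzRingType) g : 0 < g ->
  (\sum_(m <- divisors g) (mu m)%:~R = (g == 1)%:R :> R)%R.
Proof.
move=> g0; rewrite -mulrz_sumr sum_mu //.
by case: (g == 1); rewrite ?mulr0z // mulr1z.
Qed.

Lemma moebius_unitary (R : comNzRingType) l n : 0 < l -> 0 < n -> l %| n ->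
  (\sum_(m <- divisors l) (mu m)%:~R * ((m * l %| n))%:R =
   (coprime l (n %/ l))%:R :> R)%R.
Proof.
move=> l0 n0 ln.
have k0 : 0 < n %/ l by rewrite divn_gt0 // dvdn_leq.
rewrite /coprime -sum_mu_R ?gcdn_gt0 ?l0 //.
under eq_bigr => m _ do rewrite -dvdn_divRL // mulr_natr mulrb.
rewrite -big_mkcond -big_filter; apply: perm_big; apply: uniq_perm.
- by rewrite filter_uniq ?divisors_uniq.
- exact: divisors_uniq.
move=> m; rewrite mem_filter -!dvdn_divisors ?gcdn_gt0 ?l0 //.
by rewrite dvdn_gcd andbC.
Qed.

Lemma sum_div_restrict (R : nmodType) (F : nat -> R) a b : 0 < a -> 0 < b ->
  (\sum_(l <- divisors a) (if (l %| b)%N then F l else 0) =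
   \sum_(l <- divisors (gcdn a b)) F l)%R.
Proof.
move=> a0 b0; rewrite -big_mkcond -big_filter; apply: perm_big; apply: uniq_perm.
- by rewrite filter_uniq ?divisors_uniq.
- exact: divisors_uniq.
move=> m; rewrite mem_filter -!dvdn_divisors ?gcdn_gt0 ?a0 //.
by rewrite dvdn_gcd andbC.
Qed.

Lemma prod_ind (R : comNzRingType) (z : R) (b : pred nat) s :
  (\prod_(q <- s) (1 + (b q)%:R * (z - 1)) = z ^+ count b s)%R.
Proof.
elim: s => [|q s IH]; first by rewrite big_nil.
rewrite big_cons IH /= exprD; case: (b q); rewrite ?mul0r ?addr0 ?mul1r //.
by rewrite expr1 addrC subrK.
Qed.

Lemma ordp_prop p a : prime p -> 0 < ordp p a /\ ordp p a %| p.-1.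
Proof.
move=> pp; split; first exact: order_gt0.
rewrite /ordp -[X in _ %| X.-1](card_Fp pp) -card_finField_unit.
by apply: cyclic.order_dvdG; rewrite inE.
Qed.

Lemma main_p (R : comNzRingType) (z : R) n d Q : 0 < n -> 0 < d -> d %| n -> 0 < Q ->
  (\sum_(l <- divisors Q) (z - 1) ^+ omega l *
     \sum_(m <- divisors l) (mu m)%:~R * ((l %| n %/ d) && (m * l %| n))%N%:R
  = z ^+ count (fun q => (q ^ logn q n %| Q) && (q ^ logn q n %| n %/ d))%N (primes n))%R.
Proof.
move=> n0 d0 dn Q0.
set N := n %/ d.
have N0 : 0 < N by rewrite divn_gt0 // dvdn_leq.
have Nn : N %| n by exact: dvdn_div.
rewrite -prod_ind -(@sum_unitary _ (fun l => (l %| Q) && (l %| N))) //; last first.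
  by move=> u v cuv; rewrite !Gauss_dvd // andbACA.
  by rewrite !dvd1n.
transitivity (\sum_(l <- divisors Q) (if (l %| n)%N then
   ((coprime l (n %/ l)%N && ((l %| Q)%N && (l %| N)%N))%:R * (z - 1) ^+ omega l) else 0))%R.
  apply: eq_big_seq => l; rewrite -dvdn_divisors // => lQ.
  have l0 : 0 < l by exact: dvdn_gt0 lQ.
  have [lN|lN] := boolP (l %| N).
    have ln : l %| n by exact: dvdn_trans lN Nn.
    rewrite ln lQ !andbT.
    under eq_bigr => m _ do rewrite andTb.
    by rewrite moebius_unitary // mulrC.
  rewrite big1 ?mulr0; last by move=> m _; rewrite mulr0.
  by case: (l %| n); rewrite //= !andbF /= mul0r.
rewrite sum_div_restrict // [in RHS](eq_big_seq (fun l => if (l %| Q)%N then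
   ((coprime l (n %/ l)%N && ((l %| Q)%N && (l %| N)%N))%:R * (z - 1) ^+ omega l) else 0))%R.
  by rewrite sum_div_restrict // gcdnC.
move=> l _; by case: (l %| Q); rewrite //= andbF mul0r.
Qed.

Lemma omega_diff n d : 0 < n -> 0 < d -> d %| n ->
  omega n - omega d = count (fun q => q ^ logn q n %| n %/ d) (primes n).
Proof.
move=> n0 d0 dn.
have N0 : 0 < n %/ d by rewrite divn_gt0 // dvdn_leq.
rewrite (eq_in_count (a2 := predC (mem (primes d)))); last first.
  move=> q; rewrite mem_primes => /and3P[pq _ qn] /=.
  rewrite pfactor_dvdn // logn_div // -logn_gt0.
  have : 0 < logn q n by rewrite logn_gt0 mem_primes pq n0.
  have : logn q d <= logn q n by rewrite dvdn_leq_log.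
  by case: (logn q d) => [|k] /=; rewrite ?subn0 ?leqnn //; lia.
have H : count (mem (primes d)) (primes n) = omega d.
  rewrite -size_filter /omega; apply: perm_size; apply: uniq_perm.
  - by rewrite filter_uniq ?primes_uniq.
  - exact: primes_uniq.
  move=> q; rewrite mem_filter /= andb_idr // !mem_primes => /and3P[-> _ qd].
  by rewrite n0 (dvdn_trans qd dn).
by rewrite -H /omega -(count_predC (mem (primes d)) (primes n)) addKn.
Qed.

Lemma count_split (T : Type) (p1 p2 : pred T) s :
  count p1 s = count (fun x => p2 x && p1 x) s + count (fun x => p1 x && ~~ p2 x) s.
Proof.
elim: s => //= y s ->; case: (p1 y); case: (p2 y) => /=; lia.
Qed.

Lemma pow_diff_bound (R : numDomainType) (z : R) A B : (`|z| <= 1)%R ->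
  (`|z ^+ (B + A) - z ^+ B| <= (2 * (0 < A))%:R)%R.
Proof.
move=> z1; case: A => [|k]; first by rewrite addn0 subrr normr0.
rewrite exprD -{2}(mulr1 (z ^+ B)%R) -mulrBr normrM normrX muln1.
have zB : (`|z| ^+ B <= 1)%R by rewrite exprn_ile1.
have zk : (`|z ^+ k.+1 - 1| <= 2)%R.
  apply: (le_trans (ler_normB _ _)); rewrite normr1 normrX.
  have : (`|z| ^+ k.+1 <= 1)%R by rewrite exprn_ile1.
  by rewrite -[2%:R%R]/(1 + 1)%R lerD2r.
rewrite -[2%:R%R]mul1r; apply: ler_pM => //; rewrite ?normr_ge0 ?exprn_ge0 //.
Qed.

Lemma per_p (R : numDomainType) (z : R) n d Q : (`|z| <= 1)%R ->
  0 < n -> 0 < d -> d %| n -> 0 < Q ->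
  (`| z ^+ (omega n - omega d) -
     \sum_(l <- divisors Q) (z - 1) ^+ omega l *
     \sum_(m <- divisors l) (mu m)%:~R * ((l %| n %/ d) && (m * l %| n))%N%:R |
   <= (2 * has (fun q => (q ^ logn q n %| n %/ d) && ~~ (q ^ logn q n %| Q)) (primes n))%N%:R)%R.
Proof.
move=> z1 n0 d0 dn Q0.
rewrite main_p // omega_diff //.
rewrite (count_split _ _ (fun q => q ^ logn q n %| Q)) has_count.
exact: pow_diff_bound.
Qed.

Lemma Qxi_gt0 xi : 0 < Qxi xi.
Proof.
rewrite /Qxi big_seq_cond; elim/big_ind: _ => // [u v u0 v0|i].
  by rewrite lcmn_gt0 u0.
by rewrite mem_index_iota => /andP[/andP[]].
Qed.

Lemma Qxi_dvd (xi : RR) m : (0 < xi)%R -> 0 < m -> (m%:R <= xi)%R -> m %| Qxi xi.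
Proof.
move=> xi0 m0 mxi; rewrite /Qxi (big_rem m) /=; last first.
  by rewrite mem_index_iota m0 ltnS truncn_ge_nat // ltW.
by rewrite mxi dvdn_lcml.
Qed.

Lemma bad_le (xi x : RR) a p : (0 < xi)%R -> prime p -> (p%:R <= x)%R ->
  p < (Num.truncn x).+1 ->
  has (fun q => (q ^ logn q p.-1 %| p.-1 %/ ordp p a) && ~~ (q ^ logn q p.-1 %| Qxi xi))
      (primes p.-1) <=
  \sum_(q < (Num.truncn x).+1 | prime q)
    \sum_(1 <= k < (Num.truncn x).+1 | (xi < (q ^ k)%N%:R)%R && ((q ^ k)%N%:R <= x)%R)
      [&& (q ^ k %| p.-1 %/ ordp p a), (q ^ k %| p.-1) & ~~ (q ^ k.+1 %| p.-1)].
Proof.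
move=> xi0 pp px pT.
set n := p.-1; set d := ordp p a.
have n0 : 0 < n by rewrite /n -ltnS prednK ?prime_gt0 ?prime_gt1.
have np : n < p by rewrite /n prednK ?prime_gt0.
case: hasP => [[q qn /andP[qN qQ]]|] //.
set e := logn q n.
move: (qn); rewrite mem_primes => /and3P[pq _ qdn].
have e0 : 0 < e by rewrite logn_gt0.
have qen : q ^ e <= n by apply: dvdn_leq => //; exact: pfactor_dvdnn.
have qT : q < (Num.truncn x).+1.
  have : q <= n by exact: dvdn_leq.
  move: np pT; set T := Num.truncn x; lia.
rewrite (bigD1 (Ordinal qT)) //=; apply: leq_trans (leq_addr _ _).
have eT : e \in index_iota 1 (Num.truncn x).+1.
  rewrite mem_index_iota e0 /=.
  have : e < q ^ e by apply: ltn_expl; exact: prime_gt1.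
  move: np pT qen; set T := Num.truncn x; set qe := q ^ e; lia.
rewrite (big_rem e) //=.
have -> : (xi < (q ^ e)%N%:R)%R.
  rewrite real_ltNge ?num_real //; apply: contra qQ => h.
  by apply: Qxi_dvd => //; rewrite expn_gt0 prime_gt0.
have -> : ((q ^ e)%N%:R <= x)%R.
  apply: le_trans px; rewrite ler_nat; apply: leq_trans qen _; exact: ltnW.
rewrite qN pfactor_dvdnn pfactor_dvdn // ltnn.
by [].
Qed.

Lemma pc_split (R : pzSemiRingType) (x : RR) a (P : nat -> bool) :
  ((prime_count x (fun p => (nu p a == 0) && P p))%:R =
   \sum_(p < (Num.truncn x).+1 | prime p && (p%:R <= x)%R && (nu p a == 0)) (P p)%:R :> R)%R.
Proof.
rewrite /prime_count natr_sum big_mkcond [RHS]big_mkcond; apply: eq_bigr => i _.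
by case: (prime i); case: (_ <= x)%R; case: (nu i a == 0); case: (P i).
Qed.

Lemma pc_split_nat (x : RR) a (P : nat -> bool) :
  prime_count x (fun p => (nu p a == 0) && P p) =
   \sum_(p < (Num.truncn x).+1 | prime p && (p%:R <= x)%R && (nu p a == 0)) P p.
Proof.
rewrite /prime_count big_mkcond [RHS]big_mkcond; apply: eq_bigr => i _.
by case: (prime i); case: (_ <= x)%R; case: (nu i a == 0); case: (P i).
Qed.

Local Open Scope ring_scope.

Theorem proposition2p6 :
  exists C : RR, forall (a : rat) (z : CC) (xi x : RR),
    a != 0 -> a != 1 -> a != -1 ->
    `|z| <= 1 ->
    0 < xi -> xi < x ->
    `| \sum_(p < (Num.truncn x).+1 | prime p && (p%:R <= x) && (nu p a == 0))
          z ^+ (omega p.-1 - omega (ordp p a))%N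
       - \sum_(l <- divisors (Qxi xi))
           (z - 1) ^+ omega l *
           \sum_(m <- divisors l)
              (mu m)%:~R *
              (prime_count x (fun p => [&& nu p a == 0,
                                          (l %| p.-1 %/ ordp p a)%N
                                        & (m * l %| p.-1)%N]))%:R |
    <= ((C * (\sum_(q < (Num.truncn x).+1 | prime q)
               \sum_(1 <= k < (Num.truncn x).+1 |
                       (xi < (q ^ k)%N%:R)%R && ((q ^ k)%N%:R <= x)%R)
                  prime_count x (fun p => [&& nu p a == 0,
                                              (q ^ k %| p.-1 %/ ordp p a)%N,
                                              (q ^ k %| p.-1)%N
                                            & ~~ (q ^ k.+1 %| p.-1)%N]))%N%:R)%R)%:C%C.
Proof.
exists 2; move=> a z xi x a0 a1 am1 z1 xi0 xix.
set T := Num.truncn x.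
set Q := Qxi xi.
have EM : \sum_(l <- divisors Q) (z - 1) ^+ omega l * \sum_(m <- divisors l)
   (mu m)%:~R * (prime_count x (fun p => [&& nu p a == 0,
      (l %| p.-1 %/ ordp p a)%N & (m * l %| p.-1)%N]))%:R =
   \sum_(p < T.+1 | prime p && (p%:R <= x) && (nu p a == 0))
     \sum_(l <- divisors Q) (z - 1) ^+ omega l * \sum_(m <- divisors l)
       (mu m)%:~R * ((l %| p.-1 %/ ordp p a) && (m * l %| p.-1))%N%:R.
  rewrite exchange_big /=; apply: eq_bigr => l _; rewrite -mulr_sumr; congr (_ * _).
  rewrite exchange_big /=; apply: eq_bigr => m _; by rewrite pc_split mulr_sumr.
have EE : (\sum_(q < T.+1 | prime q)
               \sum_(1 <= k < T.+1 |
                       (xi < (q ^ k)%N%:R)%R && ((q ^ k)%N%:R <= x)%R)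
                  prime_count x (fun p => [&& nu p a == 0,
                                              (q ^ k %| p.-1 %/ ordp p a)%N,
                                              (q ^ k %| p.-1)%N
                                            & ~~ (q ^ k.+1 %| p.-1)%N]))%N =
   (\sum_(p < T.+1 | prime p && (p%:R <= x)%R && (nu p a == 0))
     \sum_(q < T.+1 | prime q)
               \sum_(1 <= k < T.+1 |
                       (xi < (q ^ k)%N%:R)%R && ((q ^ k)%N%:R <= x)%R)
      [&& (q ^ k %| p.-1 %/ ordp p a), (q ^ k %| p.-1) & ~~ (q ^ k.+1 %| p.-1)])%N.
  rewrite exchange_big /=; apply: eq_bigr => q _.
  rewrite exchange_big /=; apply: eq_bigr => k _; by rewrite pc_split_nat.
rewrite EM EE -sumrB.
set E := (\sum_(p < T.+1 | _) _)%N.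
have -> : ((2 * E%:R)%:C)%C = (2 * E)%N%:R :> CC.
  by rewrite natrM rmorphM /= !rmorph_nat.
apply: (le_trans (ler_norm_sum _ _ _)).
apply: (@le_trans _ _ (\sum_(p < T.+1 | prime p && (p%:R <= x) && (nu p a == 0))
  (2 * has (fun q => (q ^ logn q p.-1 %| p.-1 %/ ordp p a) &&
     ~~ (q ^ logn q p.-1 %| Qxi xi)) (primes p.-1))%N%:R)).
  apply: ler_sum => p /andP[/andP[pp px] _].
  have [d0 dn] := @ordp_prop p a pp.
  apply: per_p => //; last exact: Qxi_gt0.
  by rewrite -ltnS prednK ?prime_gt0 ?prime_gt1.
rewrite -natr_sum ler_nat -big_distrr /= leq_mul2l /=.
rewrite /E; apply: leq_sum => p /andP[/andP[pp px] _].
by apply: bad_le.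
Qed.
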